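(* Let $A$ be a semiprime associative algebra and $Q$ any subalgebra of $Q^l_{\max}(A)$ containing $A$. Then $A\subseteq Q$ is a dense extension.
   Context: Algebras over a commutative unital ring $\Phi$; $Q^l_{\max}(A)$ is the maximal left (Utumi) quotient algebra of $A$. For an algebra $Q$, $M(Q)$ is the subalgebra of $\mathrm{End}_\Phi(Q)$ generated by the identity and the left and right multiplication operators $\lambda_q(x)=qx$, $\rho_q(x)=xq$, $q\in Q$. An extension $A\subseteq Q$ is dense if the only $\mu\in M(Q)$ with $\mu(A)=0$ is $\mu=0$. *)

(* Defs.v *)
From HB Require Import structures.
From mathcomp Require Import all_boot all_algebra.
Set Implicit Arguments. Unset Strict Implicit. Unset Printing Implicit Defensive.
Import GRing.Theory.
Local Open Scope ring_scope.

(* Possibly non-unital associative algebras over a commutative unital ring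
   Phi are modelled as a Phi-module V with a Phi-bilinear associative
   product [mul]. *)

Section AlgDefs.
Variables (Phi : comPzRingType) (V : lmodType Phi) (mul : V -> V -> V).

Definition assoc_alg : Prop :=
  [/\ (forall x y z, mul x (mul y z) = mul (mul x y) z),
      (forall x y z, mul (x + y) z = mul x z + mul y z),
      (forall x y z, mul x (y + z) = mul x y + mul x z),
      (forall (c : Phi) x y, mul (c *: x) y = c *: mul x y) &
      (forall (c : Phi) x y, mul x (c *: y) = c *: mul x y)].

Definition subspace (S : V -> Prop) : Prop :=
  [/\ S 0, (forall x y, S x -> S y -> S (x + y)) &
      (forall (c : Phi) x, S x -> S (c *: x))].

Definition subalgebra (S : V -> Prop) : Prop :=
  subspace S /\ (forall x y, S x -> S y -> S (mul x y)).

Definition ideal_of (A I : V -> Prop) : Prop :=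
  [/\ (forall x, I x -> A x), subspace I,
      (forall a x, A a -> I x -> I (mul a x)) &
      (forall a x, A a -> I x -> I (mul x a))].

Definition semiprime (A : V -> Prop) : Prop :=
  forall I, ideal_of A I ->
    (forall x y, I x -> I y -> mul x y = 0) -> forall x, I x -> x = 0.

Definition dense_left_ideal (A I : V -> Prop) : Prop :=
  [/\ (forall x, I x -> A x), subspace I,
      (forall a x, A a -> I x -> I (mul a x)) &
      (forall p q, A p -> A q -> p <> 0 ->
         exists a, [/\ A a, mul a p <> 0 & I (mul a q)])].

(* The whole algebra V is the maximal left quotient algebra Q^l_max(A) of its
   subalgebra A, via Utumi's characterization:
   (i) every q has a dense left ideal I of A with I q <= A;
   (ii) I q = 0 with I dense forces q = 0;
   (iii) every left A-module map f : I -> A (I dense) is right multiplication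
         by some q. *)
Definition is_max_left_quotient (A : V -> Prop) : Prop :=
  [/\ (forall q, exists I, dense_left_ideal A I /\ forall x, I x -> A (mul x q)),
      (forall I q, dense_left_ideal A I ->
          (forall x, I x -> mul x q = 0) -> q = 0) &
      (forall I (f : V -> V), dense_left_ideal A I ->
          (forall x, I x -> A (f x)) ->
          (forall x y, I x -> I y -> f (x + y) = f x + f y) ->
          (forall (c : Phi) x, I x -> f (c *: x) = c *: f x) ->
          (forall a x, A a -> I x -> f (mul a x) = mul a (f x)) ->
          exists q, forall x, I x -> f x = mul x q)].

(* Operators generating the multiplication algebra M(Q): the subalgebra of
   End_Phi generated by the identity and the maps lambda_q, rho_q, q in Q.
   They are represented as maps on the ambient V; since they preserve Q,
   their restrictions to Q are exactly the elements of M(Q). *)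
Inductive mult_op (Q : V -> Prop) : (V -> V) -> Prop :=
  | mo_id : mult_op Q id
  | mo_L q : Q q -> mult_op Q (mul q)
  | mo_R q : Q q -> mult_op Q (fun x => mul x q)
  | mo_add f g : mult_op Q f -> mult_op Q g -> mult_op Q (fun x => f x + g x)
  | mo_scale (c : Phi) f : mult_op Q f -> mult_op Q (fun x => c *: f x)
  | mo_comp f g : mult_op Q f -> mult_op Q g -> mult_op Q (fun x => f (g x)).

Definition dense_extension (A Q : V -> Prop) : Prop :=
  forall mu, mult_op Q mu -> (forall a, A a -> mu a = 0) ->
    forall x, Q x -> mu x = 0.

End AlgDefs.

(* Main.v *)
Require Import Defs.
From mathcomp Require Import all_boot all_algebra.
From Stdlib Require Import Classical ClassicalEpsilon.
Set Implicit Arguments. Unset Strict Implicit. Unset Printing Implicit Defensive.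
Import GRing.Theory.
Local Open Scope ring_scope.

Section P13.
Variables (Phi : comPzRingType) (V : lmodType Phi) (mul : V -> V -> V) (A : V -> Prop).
Hypothesis Hass : assoc_alg mul.
Hypothesis HA : subalgebra mul A.
Hypothesis Hsp : semiprime mul A.
Hypothesis Hq : is_max_left_quotient mul A.

Lemma mulA x y z : mul x (mul y z) = mul (mul x y) z.
Proof. by case: Hass. Qed.
Lemma mulDl x y z : mul (x + y) z = mul x z + mul y z.
Proof. by case: Hass. Qed.
Lemma mulDr x y z : mul x (y + z) = mul x y + mul x z.
Proof. by case: Hass. Qed.
Lemma mulZl (c : Phi) x y : mul (c *: x) y = c *: mul x y.
Proof. by case: Hass. Qed.
Lemma mulZr (c : Phi) x y : mul x (c *: y) = c *: mul x y.
Proof. by case: Hass. Qed.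
Lemma mul0l y : mul 0 y = 0.
Proof. have <- : (0 : Phi) *: (0 : V) = 0 by rewrite scale0r. by rewrite mulZl !scale0r. Qed.
Lemma mul0r y : mul y 0 = 0.
Proof. have <- : (0 : Phi) *: (0 : V) = 0 by rewrite scale0r. by rewrite mulZr !scale0r. Qed.
Lemma mulNl x y : mul (- x) y = - mul x y.
Proof. by rewrite -scaleN1r mulZl scaleN1r. Qed.
Lemma mulNr x y : mul y (- x) = - mul y x.
Proof. by rewrite -scaleN1r mulZr scaleN1r. Qed.
Lemma mulBl x y z : mul (x - y) z = mul x z - mul y z.
Proof. by rewrite mulDl mulNl. Qed.
Lemma mulBr x y z : mul z (x - y) = mul z x - mul z y.
Proof. by rewrite mulDr mulNr. Qed.

Lemma A0 : A 0. Proof. by case: HA => [[]]. Qed.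
Lemma AD x y : A x -> A y -> A (x + y). Proof. by case: HA => [[_ h _] _]; apply: h. Qed.
Lemma AZ (c : Phi) x : A x -> A (c *: x). Proof. by case: HA => [[_ _ h] _]; apply: h. Qed.
Lemma AM x y : A x -> A y -> A (mul x y). Proof. by case: HA => _ h; apply: h. Qed.
Lemma AN x : A x -> A (- x). Proof. by move=> h; have := AZ (-1) h; rewrite scaleN1r. Qed.
Lemma AB x y : A x -> A y -> A (x - y). Proof. by move=> h1 h2; apply: AD => //; apply: AN. Qed.

Lemma Qi q : exists I, dense_left_ideal mul A I /\ forall x, I x -> A (mul x q).
Proof. by case: Hq => h _ _; apply: h. Qed.
Lemma Qii I q : dense_left_ideal mul A I -> (forall x, I x -> mul x q = 0) -> q = 0.
Proof. by case: Hq => _ h _; apply: h. Qed.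

Section Dense.
Variable I : V -> Prop.
Hypothesis dI : dense_left_ideal mul A I.
Lemma dl_sub x : I x -> A x. Proof. by case: dI => h _ _ _; apply: h. Qed.
Lemma dl_0 : I 0. Proof. by case: dI => _ [] . Qed.
Lemma dl_D x y : I x -> I y -> I (x + y). Proof. by case: dI => _ [_ h _] _ _; apply: h. Qed.
Lemma dl_Z (c : Phi) x : I x -> I (c *: x). Proof. by case: dI => _ [_ _ h] _ _; apply: h. Qed.
Lemma dl_M a x : A a -> I x -> I (mul a x). Proof. by case: dI => _ _ h _; apply: h. Qed.
Lemma dl_dense p q : A p -> A q -> p <> 0 -> exists a, [/\ A a, mul a p <> 0 & I (mul a q)].
Proof. by case: dI => _ _ _ h; apply: h. Qed.
Lemma dl_wit p : p <> 0 -> exists a, I a /\ mul a p <> 0.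
Proof.
move=> hp; apply: NNPP => hn; apply: hp; apply: (Qii dI) => x hx.
by apply: NNPP => hx'; apply: hn; exists x.
Qed.
End Dense.

Lemma fzero (f : V -> V) : f (0 + 0) = f 0 + f 0 -> f 0 = 0.
Proof. by rewrite addr0 => h; apply/esym/(@addrI _ (f 0)); rewrite addr0 {1}h. Qed.

Lemma A_dense : dense_left_ideal mul A A.
Proof.
split=> //.
- split; [exact: A0 | exact: AD | exact: AZ].
- by move=> a x; apply: AM.
- move=> p q hp hq hp0.
  have [I [dI _]] := Qi 0.
  have [a [ha hap]] := dl_wit dI hp0.
  have haA : A a := dl_sub dI ha.
  by exists a; split => //; apply: AM.
Qed.

Lemma dense_cap I1 I2 : dense_left_ideal mul A I1 -> dense_left_ideal mul A I2 ->
  dense_left_ideal mul A (fun x => I1 x /\ I2 x).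
Proof.
move=> d1 d2; split.
- by move=> x [h _]; exact: (dl_sub d1 h).
- split; first by split=> /=; [exact: (dl_0 d1) | exact: (dl_0 d2)].
  + by move=> x y [h1 h2] [h3 h4] /=; split; [exact: (dl_D d1 h1 h3) | exact: (dl_D d2 h2 h4)].
  + by move=> c x [h1 h2] /=; split; [exact: (dl_Z d1 c h1) | exact: (dl_Z d2 c h2)].
- by move=> a x ha [h1 h2] /=; split; [exact: (dl_M d1 ha h1) | exact: (dl_M d2 ha h2)].
- move=> p q hp hq hp0.
  have [a1 [ha1 h1 hq1]] := dl_dense d1 hp hq hp0.
  have [a2 [ha2 h2 hq2]] := dl_dense d2 (AM ha1 hp) (AM ha1 hq) h1.
  exists (mul a2 a1); split; first exact: AM.
  + by rewrite -mulA.
  + by rewrite -mulA; split => //; apply: dl_M d1 _ _ ha2 hq1.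
Qed.

Lemma ext_fun I (f : V -> V) : dense_left_ideal mul A I ->
  (forall x y, I x -> I y -> f (x + y) = f x + f y) ->
  (forall (c : Phi) x, I x -> f (c *: x) = c *: f x) ->
  (forall a x, A a -> I x -> f (mul a x) = mul a (f x)) ->
  exists q, forall x, I x -> f x = mul x q.
Proof.
move=> dI fD fZ fM.
pose I' := fun x => I x /\ A (f x).
have f0 : f 0 = 0 by apply: fzero; apply: fD; exact: dl_0 dI.
have dI' : dense_left_ideal mul A I'.
  split.
  - by move=> x [h _]; exact: (dl_sub dI h).
  - split.
    + by split; [exact: (dl_0 dI) | rewrite f0; exact: A0].
    + by move=> x y [h1 h2] [h3 h4] /=; split; [exact: (dl_D dI h1 h3) | rewrite fD //; exact: AD].
    + by move=> c x [h1 h2] /=; split; [exact: (dl_Z dI c h1) | rewrite fZ //; exact: AZ].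
  - by move=> a x ha [h1 h2] /=; split; [exact: (dl_M dI ha h1) | rewrite fM //; exact: AM].
  - move=> p q hp hq hp0.
    have [a1 [ha1 h1 hq1]] := dl_dense dI hp hq hp0.
    have [D [dD hD]] := Qi (f (mul a1 q)).
    have [a2 [ha2 h2]] := dl_wit dD h1.
    have ha2A : A a2 := dl_sub dD ha2.
    exists (mul a2 a1); split; first exact: AM.
    + by rewrite -mulA.
    + rewrite -mulA; split; first exact: (dl_M dI ha2A hq1).
      by rewrite fM //; apply: hD.
have [q hq] : exists q, forall x, I' x -> f x = mul x q.
  by case: Hq => _ _ h; apply: (h I' f dI') => //; [move=> x []|move=> x y [] ? _ [] ? _; apply: fD|
     move=> c x [] ? _; apply: fZ| move=> a x ha [] ? _; apply: fM].
exists q => x hx.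
have [D [dD hD]] := Qi (f x).
apply/eqP; rewrite -subr_eq0; apply/eqP; apply: (Qii dD) => d hd.
have hdA : A d := dl_sub dD hd.
have h1 : I' (mul d x) by split; [exact: (dl_M dI hdA hx) | rewrite fM //; apply: hD].
by rewrite mulBr -fM // hq // mulA subrr.
Qed.

Lemma ext_rel I (R : V -> V -> Prop) : dense_left_ideal mul A I ->
  (forall w, I w -> exists z, R w z) ->
  (forall w z z', R w z -> R w z' -> z = z') ->
  (forall w w' z z', R w z -> R w' z' -> R (w + w') (z + z')) ->
  (forall (c : Phi) w z, R w z -> R (c *: w) (c *: z)) ->
  (forall a w z, A a -> R w z -> R (mul a w) (mul a z)) ->
  exists q, forall w z, I w -> R w z -> z = mul w q.
Proof.
move=> dI hex hfun hD hZ hM.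
pose f w := epsilon (inhabits (0 : V)) (R w).
have hf : forall w, I w -> R w (f w) by move=> w hw; apply: epsilon_spec; apply: hex.
have [q hq] : exists q, forall x, I x -> f x = mul x q.
  apply: (ext_fun dI).
  - move=> x y hx hy; apply: (hfun (x + y)); first by apply: hf; exact: (dl_D dI hx hy).
    by apply: hD; apply: hf.
  - move=> c x hx; apply: (hfun (c *: x)); first by apply: hf; exact: (dl_Z dI c hx).
    by apply: hZ; apply: hf.
  - move=> a x ha hx; apply: (hfun (mul a x)); first by apply: hf; exact: (dl_M dI ha hx).
    by apply: hM => //; apply: hf.
exists q => w z hw hr; rewrite -hq //; apply: (hfun w) => //; exact: hf.
Qed.

Section Ideal.
Variable D : V -> Prop.
Hypothesis iD : ideal_of mul A D.
Lemma id_sub x : D x -> A x. Proof. by case: iD => h _ _ _; apply: h. Qed.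
Lemma id_0 : D 0. Proof. by case: iD => _ [] . Qed.
Lemma id_D x y : D x -> D y -> D (x + y). Proof. by case: iD => _ [_ h _] _ _; apply: h. Qed.
Lemma id_Z (c : Phi) x : D x -> D (c *: x). Proof. by case: iD => _ [_ _ h] _ _; apply: h. Qed.
Lemma id_L a x : A a -> D x -> D (mul a x). Proof. by case: iD => _ _ h _; apply: h. Qed.
Lemma id_R a x : A a -> D x -> D (mul x a). Proof. by case: iD => _ _ _ h; apply: h. Qed.
Lemma id_N x : D x -> D (- x). Proof. by move=> h; have := id_Z (-1) h; rewrite scaleN1r. Qed.
Lemma id_B x y : D x -> D y -> D (x - y). Proof. by move=> h1 h2; apply: id_D => //; apply: id_N. Qed.

Lemma SPa y : D y -> (forall d, D d -> mul d y = 0) -> y = 0.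
Proof.
move=> hy hd.
pose T t := D t /\ forall d, D d -> mul d t = 0.
apply: (Hsp (I := T)); last by split.
- split.
  + by move=> x [h _]; exact: (id_sub h).
  + split.
    * by split; [exact: id_0 | move=> d _; rewrite mul0r].
    * move=> x z [h1 h2] [h3 h4]; split; first exact: (id_D h1 h3).
      by move=> d hd'; rewrite mulDr h2 // h4 // addr0.
    * move=> c x [h1 h2]; split; first exact: (id_Z c h1).
      by move=> d hd'; rewrite mulZr h2 // scaler0.
  + move=> a x ha [h1 h2]; split; first exact: (id_L ha h1).
    by move=> d hd'; rewrite mulA h2 //; exact: (id_R ha hd').
  + move=> a x ha [h1 h2]; split; first exact: (id_R ha h1).
    by move=> d hd'; rewrite mulA h2 // mul0l.
- by move=> x z [h1 h2] [h3 h4]; apply: h4.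
Qed.

Lemma SPb y : D y -> (forall d, D d -> mul y d = 0) -> y = 0.
Proof.
move=> hy hd.
pose T t := D t /\ forall d, D d -> mul t d = 0.
apply: (Hsp (I := T)); last by split.
- split.
  + by move=> x [h _]; exact: (id_sub h).
  + split.
    * by split; [exact: id_0 | move=> d _; rewrite mul0l].
    * move=> x z [h1 h2] [h3 h4]; split; first exact: (id_D h1 h3).
      by move=> d hd'; rewrite mulDl h2 // h4 // addr0.
    * move=> c x [h1 h2]; split; first exact: (id_Z c h1).
      by move=> d hd'; rewrite mulZl h2 // scaler0.
  + move=> a x ha [h1 h2]; split; first exact: (id_L ha h1).
    by move=> d hd'; rewrite -mulA h2 // mul0r.
  + move=> a x ha [h1 h2]; split; first exact: (id_R ha h1).
    by move=> d hd'; rewrite -mulA h2 //; exact: (id_L ha hd').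
- by move=> x z [h1 h2] [h3 h4]; apply: h2.
Qed.
End Ideal.

Fixpoint ev (rs : seq (V -> V)) (cs : nat -> V) (y : V) : V :=
  match rs with
  | [::] => 0
  | r :: rs' => mul (cs 0%N) (r y) + ev rs' (fun k => cs k.+1) y
  end.

Fixpoint allp (T : Type) (P : T -> Prop) (s : seq T) : Prop :=
  match s with [::] => True | x :: s' => P x /\ allp P s' end.

Definition LC (r : V -> V) := forall v y, A v -> r (mul v y) = mul v (r y).

Lemma ev_add rs c1 c2 y : ev rs (fun k => c1 k + c2 k) y = ev rs c1 y + ev rs c2 y.
Proof.
elim: rs c1 c2 => [|r rs IH] c1 c2 /=; first by rewrite addr0.
by rewrite IH mulDl addrACA.
Qed.
Lemma ev_scale rs (c : Phi) c1 y : ev rs (fun k => c *: c1 k) y = c *: ev rs c1 y.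
Proof.
elim: rs c1 => [|r rs IH] c1 /=; first by rewrite scaler0.
by rewrite IH mulZl scalerDr.
Qed.
Lemma ev_zero rs y : ev rs (fun _ => 0) y = 0.
Proof. by elim: rs => [|r rs IH] //=; rewrite IH mul0l addr0. Qed.
Lemma ev_opp rs c1 y : ev rs (fun k => - c1 k) y = - ev rs c1 y.
Proof.
elim: rs c1 => [|r rs IH] c1 /=; first by rewrite oppr0.
by rewrite IH mulNl opprD.
Qed.
Lemma ev_sub rs c1 c2 y : ev rs (fun k => c1 k - c2 k) y = ev rs c1 y - ev rs c2 y.
Proof. by rewrite (ev_add rs c1 (fun k => - c2 k)) ev_opp. Qed.
Lemma ev_lmul rs u c y : ev rs (fun k => mul u (c k)) y = mul u (ev rs c y).
Proof.
elim: rs c => [|r rs IH] c /=; first by rewrite mul0r.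
by rewrite IH mulDr mulA.
Qed.
Lemma ev_rmul rs v c y : allp LC rs -> A v ->
  ev rs (fun k => mul (c k) v) y = ev rs c (mul v y).
Proof.
elim: rs c => [|r rs IH] c //= [hr hrs] hv.
by rewrite IH // hr // mulA.
Qed.

Lemma main_ev rs : allp LC rs -> forall cs, (forall k, A (cs k)) ->
  (forall y, A y -> ev rs cs y = 0) -> forall x, ev rs cs x = 0.
Proof.
elim: rs => [|r rs IH] //= [hr hrs] cs hcs hy x.
pose rr := r :: rs.
have hall : allp LC rr by split.
pose G e := (forall k, A (e k)) /\ forall y, A y -> ev rr e y = 0.
pose Rel d z := exists e, [/\ G e, e 0%N = d & z = ev rr e x].
have Rfun : forall d z z', Rel d z -> Rel d z' -> z = z'.
  move=> d z z' [e1 [[he1 hy1] h1 ->]] [e2 [[he2 hy2] h2 ->]] /=.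
  pose e := fun k => e1 k.+1 - e2 k.+1.
  have := IH hrs e (fun k => AB (he1 k.+1) (he2 k.+1)).
  move=> H; have {}H := H _ x.
  rewrite ev_sub in H.
  have -> : ev rs (fun k => e1 k.+1) x = ev rs (fun k => e2 k.+1) x.
    apply/eqP; rewrite -subr_eq0; apply/eqP; apply: H => y hyA.
    rewrite ev_sub; have := hy1 y hyA; have := hy2 y hyA => /= E2 E1.
    by rewrite h1 h2 in E1 E2; apply/eqP; rewrite subr_eq0; apply/eqP; apply: (@addrI _ (mul d (r y))); rewrite E1 E2.
  by rewrite h1 h2.
have R0 : Rel 0 0.
  exists (fun _ => 0); split => //; last by rewrite ev_zero.
  by split => [k|y _]; [exact: A0 | rewrite ev_zero].
have RD : forall d d' z z', Rel d z -> Rel d' z' -> Rel (d + d') (z + z').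
  move=> d d' z z' [e1 [[he1 hy1] h1 ->]] [e2 [[he2 hy2] h2 ->]].
  exists (fun k => e1 k + e2 k); split; last by rewrite ev_add.
  - split => [k|y hyA]; first by apply: AD.
    by rewrite ev_add hy1 // hy2 // addr0.
  - by rewrite h1 h2.
have RZ : forall (c : Phi) d z, Rel d z -> Rel (c *: d) (c *: z).
  move=> c d z [e1 [[he1 hy1] h1 ->]].
  exists (fun k => c *: e1 k); split; last by rewrite ev_scale.
  - split => [k|y hyA]; first by apply: AZ.
    by rewrite ev_scale hy1 // scaler0.
  - by rewrite h1.
have RL : forall u d z, A u -> Rel d z -> Rel (mul u d) (mul u z).
  move=> u d z hu [e1 [[he1 hy1] h1 ->]].
  exists (fun k => mul u (e1 k)); split; last by rewrite ev_lmul.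
  - split => [k|y hyA]; first by apply: AM.
    by rewrite ev_lmul hy1 // mul0r.
  - by rewrite h1.
have Gr : forall v e, A v -> G e -> G (fun k => mul (e k) v).
  move=> v e hv [he hye]; split => [k|y hyA]; first by apply: AM.
  by rewrite ev_rmul // hye //; apply: AM.
have RR : forall v d z, A v -> Rel d z -> exists z', Rel (mul d v) z'.
  move=> v d z hv [e1 [hG h1 _]].
  by eexists; exists (fun k => mul (e1 k) v); split; [apply: Gr | rewrite h1 | ].
have RJ : forall v d z, A v -> A (mul v x) -> Rel d z -> Rel (mul d v) 0.
  move=> v d z hv hvx [e1 [hG h1 _]].
  exists (fun k => mul (e1 k) v); split; [apply: Gr | rewrite h1 | ] => //.
  by case: hG => _ hye; rewrite ev_rmul // hye.
pose Dp d := exists z, Rel d z.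
have iDp : ideal_of mul A Dp.
  split.
  - by move=> d [z [e [[he _] <- _]]].
  - split; first by exists 0.
    + by move=> d d' [z hz] [z' hz']; exists (z + z'); apply: RD.
    + by move=> c d [z hz]; exists (c *: z); apply: RZ.
  - by move=> u d hu [z hz]; exists (mul u z); apply: RL.
  - by move=> v d hv [z hz]; apply: RR hv hz.
pose Ann a := A a /\ forall d, Dp d -> mul a d = 0.
have iAnn : ideal_of mul A Ann.
  split.
  - by move=> a [].
  - split; first by split; [exact: A0 | move=> d _; rewrite mul0l].
    + move=> a a' [ha h] [ha' h']; split; first exact: AD.
      by move=> d hd; rewrite mulDl h // h' // addr0.
    + move=> c a [ha h]; split; first exact: AZ.
      by move=> d hd; rewrite mulZl h // scaler0.
  - move=> u a hu [ha h]; split; first exact: AM.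
    by move=> d hd; rewrite -mulA h // mul0r.
  - move=> u a hu [ha h]; split; first exact: AM.
    by move=> d hd; rewrite -mulA h //; exact: (id_L iDp hu hd).
pose E w := exists d a, [/\ Dp d, Ann a & w = d + a].
have iE : ideal_of mul A E.
  split.
  - move=> w [d [a [hd ha ->]]]; apply: AD; [exact: (id_sub iDp hd) | exact: (id_sub iAnn ha)].
  - split; first by exists 0, 0; split; [exact: (id_0 iDp) | exact: (id_0 iAnn) | rewrite addr0].
    + move=> w w' [d [a [hd ha ->]]] [d' [a' [hd' ha' ->]]].
      exists (d + d'), (a + a'); split; [exact: (id_D iDp hd hd') | exact: (id_D iAnn ha ha') | by rewrite addrACA].
    + move=> c w [d [a [hd ha ->]]].
      exists (c *: d), (c *: a); split; [exact: (id_Z iDp c hd) | exact: (id_Z iAnn c ha) | by rewrite scalerDr].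
  - move=> u w hu [d [a [hd ha ->]]].
    exists (mul u d), (mul u a); split; [exact: (id_L iDp hu hd) | exact: (id_L iAnn hu ha) | by rewrite mulDr].
  - move=> u w hu [d [a [hd ha ->]]].
    exists (mul d u), (mul a u); split; [exact: (id_R iDp hu hd) | exact: (id_R iAnn hu ha) | by rewrite mulDl].
have dE : dense_left_ideal mul A E.
  split.
  - exact: (id_sub iE).
  - split; [exact: (id_0 iE) | exact: (id_D iE) | exact: (id_Z iE)].
  - exact: (id_L iE).
  - move=> p q hp hq hp0.
    case: (classic (exists w, E w /\ mul w p <> 0)) => [[w [hw hwp]]|hno].
      by exists w; split => //; [exact: (id_sub iE hw) | exact: (id_R iE hq hw)].
    exfalso; apply: hp0.
    have hEp : forall w, E w -> mul w p = 0.
      by move=> w hw; apply: NNPP => h; apply: hno; exists w.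
    have hDp : forall d, Dp d -> mul d p = 0.
      move=> d hd; apply: hEp; exists d, 0; split => //; last by rewrite addr0.
      exact: (id_0 iAnn).
    have hAp : Ann p.
      split => // d hd; apply: (SPa iDp (id_L iDp hp hd)) => d' hd'.
      by rewrite mulA hDp // mul0l.
    apply: (SPa iAnn hAp) => a ha; apply: hEp; exists 0, a; split => //; last by rewrite add0r.
    exact: (id_0 iDp).
pose R' w z := exists d a, [/\ Rel d z, Ann a & w = d + a].
have [om hom] : exists om, forall w z, E w -> R' w z -> z = mul w om.
  apply: (ext_rel dE).
  - move=> w [d [a [[z hz] ha ->]]]; exists z, d, a; split => //.
  - move=> w z z' [d [a [hz ha ->]]] [d' [a' [hz' ha' he]]].
    have hdd : d = d'.
      have hd : d = d' + a' - a by rewrite -he addrK.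
      apply/eqP; rewrite -subr_eq0; apply/eqP.
      apply: (SPb iDp).
      + apply: (id_B iDp); [by exists z | by exists z'].
      + move=> d0 hd0; have -> : d - d' = a' - a.
          by rewrite {1}hd addrAC [d' + a']addrC addrK.
        case: ha => _ h1; case: ha' => _ h2.
        by rewrite mulBl h1 // h2 // subrr.
    by subst d'; apply: (Rfun d).
  - move=> w w' z z' [d [a [hz ha ->]]] [d' [a' [hz' ha' ->]]].
    exists (d + d'), (a + a'); split; [exact: RD | exact: (id_D iAnn ha ha') | by rewrite addrACA].
  - move=> c w z [d [a [hz ha ->]]].
    exists (c *: d), (c *: a); split; [exact: RZ | exact: (id_Z iAnn c ha) | by rewrite scalerDr].
  - move=> u w z hu [d [a [hz ha ->]]].
    exists (mul u d), (mul u a); split; [exact: RL | exact: (id_L iAnn hu ha) | by rewrite mulDr].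
have [J [dJ hJ]] := Qi x.
have hs : forall s, J s -> mul s om = 0.
  move=> s hsJ; have hsA : A s := dl_sub dJ hsJ.
  apply: (Qii dE) => w hw; case: (hw) => d [a [[z hz] ha hwe]].
  rewrite mulA; apply/esym; apply: hom; first exact: (id_R iE hsA hw).
  exists (mul d s), (mul a s); split.
  - exact: (RJ s d z hsA (hJ s hsJ) hz).
  - exact: (id_R iAnn hsA ha).
  - by rewrite hwe mulDl.
have om0 : om = 0 by apply: (Qii dJ).
have hRc : Rel (cs 0%N) (ev rr cs x) by exists cs; split.
have := hom (cs 0%N) (ev rr cs x).
rewrite om0 mul0r /= => -> //.
- by exists (cs 0%N), 0; split; [exists (ev rr cs x) | exact: (id_0 iAnn) | rewrite addr0].
- by exists (cs 0%N), 0; split; [| exact: (id_0 iAnn) | rewrite addr0].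
Qed.

Definition lo (o : option V) y := if o is Some a then mul a y else y.
Definition lm (l : V) (o : option V) := if o is Some a then mul l a else l.
Definition omul (o o' : option V) :=
  match o, o' with
  | Some a, Some b => Some (mul a b)
  | Some a, None => Some a
  | None, _ => o'
  end.
Fixpoint evNF (s : seq (option V * (V -> V))) y :=
  match s with [::] => 0 | p :: s' => lo p.1 (p.2 y) + evNF s' y end.
Definition goodR (r : V -> V) :=
  (forall y z, r (y + z) = r y + r z) /\ (forall v y, r (mul v y) = mul v (r y)).
Definition good (s : seq (option V * (V -> V))) := allp (fun p => goodR p.2) s.

Lemma lo_add o y z : lo o (y + z) = lo o y + lo o z.
Proof. by case: o => [a|] //=; rewrite mulDr. Qed.
Lemma lo_scale o (c : Phi) z : lo o (c *: z) = c *: lo o z.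
Proof. by case: o => [a|] //=; rewrite mulZr. Qed.
Lemma lo_0 o : lo o 0 = 0.
Proof. by case: o => [a|] //=; rewrite mul0r. Qed.
Lemma lo_omul o o' z : lo (omul o o') z = lo o (lo o' z).
Proof. by case: o => [a|]; case: o' => [b|] //=; rewrite mulA. Qed.
Lemma goodR0 r : goodR r -> r 0 = 0.
Proof. by case=> hD _; apply: fzero; rewrite hD. Qed.
Lemma goodR_lo r o z : goodR r -> r (lo o z) = lo o (r z).
Proof. by case=> _ hM; case: o => [a|] //=; rewrite hM. Qed.

Lemma evNF_cat s1 s2 y : evNF (s1 ++ s2) y = evNF s1 y + evNF s2 y.
Proof. by elim: s1 => [|p s1 IH] /=; [rewrite add0r | rewrite IH addrA]. Qed.
Lemma good_cat s1 s2 : good s1 -> good s2 -> good (s1 ++ s2).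
Proof. by elim: s1 => [|p s1 IH] //= [h1 h2] h3; split => //; apply: IH. Qed.

Definition scS (c : Phi) (s : seq (option V * (V -> V))) :=
  map (fun p => (p.1, fun y => c *: p.2 y)) s.
Lemma evNF_sc c s y : evNF (scS c s) y = c *: evNF s y.
Proof.
elim: s => [|p s IH] /=; first by rewrite scaler0.
by rewrite IH lo_scale scalerDr.
Qed.
Lemma good_sc c s : good s -> good (scS c s).
Proof.
elim: s => [|p s IH] //= [[hD hM] h2]; split; last exact: IH.
by split=> [y z|v y] /=; [rewrite hD scalerDr | rewrite hM mulZr].
Qed.

Fixpoint comp1 (p : option V * (V -> V)) (s2 : seq (option V * (V -> V))) : seq (option V * (V -> V)) :=
  match s2 with
  | [::] => [::]
  | p' :: s2' => (omul p.1 p'.1, fun y => p.2 (p'.2 y)) :: comp1 p s2'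
  end.
Fixpoint compS (s1 s2 : seq (option V * (V -> V))) : seq (option V * (V -> V)) :=
  match s1 with [::] => [::] | p :: s1' => comp1 p s2 ++ compS s1' s2 end.

Lemma comp1E p s2 y : goodR p.2 -> lo p.1 (p.2 (evNF s2 y)) = evNF (comp1 p s2) y.
Proof.
case: p => o r /= hp; elim: s2 => [|[o' r'] s2 IH] /=; first by rewrite goodR0 // lo_0.
case: hp => hD hM.
by rewrite hD lo_add IH (goodR_lo _ _ (conj hD hM)) lo_omul.
Qed.
Lemma compSE s1 s2 y : good s1 -> evNF s1 (evNF s2 y) = evNF (compS s1 s2) y.
Proof.
elim: s1 => [|p s1 IH] //= [hp hs1].
by rewrite evNF_cat IH // comp1E.
Qed.
Lemma good_comp1 p s2 : goodR p.2 -> good s2 -> good (comp1 p s2).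
Proof.
move=> hp; elim: s2 => [|p' s2 IH2] //= [hp' hs2]; split; last exact: IH2.
case: hp => hD hM; case: hp' => hD' hM'.
by split=> [y z|v y] /=; [rewrite hD' hD | rewrite hM' hM].
Qed.
Lemma good_comp s1 s2 : good s1 -> good s2 -> good (compS s1 s2).
Proof.
elim: s1 => [|p s1 IH] //= [hp hs1] hs2; apply: good_cat; last exact: IH.
exact: good_comp1.
Qed.

Lemma NF Q mu : mult_op mul Q mu -> exists s, good s /\ forall y, mu y = evNF s y.
Proof.
elim=> {mu}.
- exists [:: (None, id)]; split; first by split => //; split.
  by move=> y /=; rewrite addr0.
- move=> q _; exists [:: (Some q, id)]; split; first by split => //; split.
  by move=> y /=; rewrite addr0.
- move=> q _; exists [:: (None, fun x => mul x q)]; split.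
    by split => //; split => [y z|v y] /=; [rewrite mulDl | rewrite mulA].
  by move=> y /=; rewrite addr0.
- move=> f g _ [s1 [h1 e1]] _ [s2 [h2 e2]]; exists (s1 ++ s2); split; first exact: good_cat.
  by move=> y; rewrite evNF_cat e1 e2.
- move=> c f _ [s1 [h1 e1]]; exists (scS c s1); split; first exact: good_sc.
  by move=> y; rewrite evNF_sc e1.
- move=> f g _ [s1 [h1 e1]] _ [s2 [h2 e2]]; exists (compS s1 s2); split; first exact: good_comp.
  by move=> y; rewrite e2 e1 compSE.
Qed.

Lemma lm_conn l (s : seq (option V * (V -> V))) y : mul l (evNF s y) = ev (map snd s) (fun k => lm l (nth None (map fst s) k)) y.
Proof.
elim: s => [|p s IH] /=; first by rewrite mul0r.
rewrite mulDr IH; congr (_ + _).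
by case: p => [[a|] r] //=; rewrite mulA.
Qed.

Lemma good_LC (s : seq (option V * (V -> V))) : good s -> allp LC (map snd s).
Proof. by elim: s => [|p s IH] //= [[_ hM] h]; split; [move=> v y _; apply: hM | apply: IH]. Qed.

Lemma dense_coefs (s : seq (option V * (V -> V))) : exists L, dense_left_ideal mul A L /\
  forall l, L l -> forall k, A (lm l (nth None (map fst s) k)).
Proof.
elim: s => [|p s [L [dL hL]]] /=.
  have [I [dI _]] := Qi 0.
  by exists I; split => // l hl k; rewrite nth_nil /=; exact: (dl_sub dI hl).
case: p => [[q|] r] /=.
- have [I [dI hI]] := Qi q.
  exists (fun x => L x /\ I x); split; first exact: dense_cap.
  by move=> l [hl hi] [|k] //=; [apply: hI | apply: hL].
- by exists L; split => // l hl [|k] /=; [exact: (dl_sub dL hl) | apply: hL].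
Qed.

Lemma dense_all mu Q : mult_op mul Q mu -> (forall a, A a -> mu a = 0) -> forall x, mu x = 0.
Proof.
move=> hmu hA x.
have [s [hs es]] := NF hmu.
have [L [dL hL]] := dense_coefs s.
apply: (Qii dL) => l hl.
rewrite es lm_conn; apply: main_ev; first exact: good_LC.
- exact: hL.
- by move=> y hy; rewrite -lm_conn -es hA // mul0r.
Qed.
End P13.

Theorem mainTheorem13 (Phi : comPzRingType) (Qmax : lmodType Phi)
  (mul : Qmax -> Qmax -> Qmax) (A Q : Qmax -> Prop) :
  assoc_alg mul ->
  subalgebra mul A ->
  semiprime mul A ->
  is_max_left_quotient mul A ->
  subalgebra mul Q ->
  (forall x, A x -> Q x) ->
  dense_extension mul A Q.
Proof.
move=> h1 h2 h3 h4 _ _ mu hmu hA x _.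
exact: (dense_all h1 h2 h3 h4 hmu hA).
Qed.
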